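(* Let $(A,\cdot,[-,-,-],\varepsilon)$ be a ternary Leibniz-Poisson color algebra. Then $A\otimes A$, graded by $(A\otimes A)_c=\bigoplus_{a+b=c}A_a\otimes A_b$, is a Leibniz-Poisson color algebra with the operations defined on homogeneous tensors by $$(x\otimes y)\cdot(x'\otimes y'):=\varepsilon(y,x')\,(x\cdot x')\otimes(y\cdot y'),\qquad [x\otimes y,x'\otimes y']:=x\otimes[y,x',y']+\varepsilon(y,x'+y')\,[x,x',y']\otimes y,$$ extended bilinearly.
   Context: $G$ is an abelian group, $\mathbb{K}$ a field of characteristic $\neq 2$, $\mathcal{H}(V)$ the homogeneous elements of a $G$-graded space $V$; even maps preserve degree. A skew-symmetric bicharacter $\varepsilon:G\times G\to\mathbb{K}^*$ satisfies $\varepsilon(a,b)\varepsilon(b,a)=1$, $\varepsilon(a,b+c)=\varepsilon(a,b)\varepsilon(a,c)$, $\varepsilon(a+b,c)=\varepsilon(a,c)\varepsilon(b,c)$; $\varepsilon(x,y)$ means $\varepsilon$ of the degrees. A Leibniz-Poisson color algebra $(P,\cdot,[-,-],\varepsilon)$ is a $G$-graded space with even bilinear maps $\cdot$ and $[-,-]$ such that $(P,\cdot)$ is associative, $[[x,y],z]=[x,[y,z]]+\varepsilon(y,z)[[x,z],y]$, and $[x\cdot y,z]=x\cdot[y,z]+\varepsilon(y,z)[x,z]\cdot y$ for all homogeneous $x,y,z$. A ternary Leibniz-Poisson color algebra $(A,\cdot,[-,-,-],\varepsilon)$ is a $G$-graded space with an even associative product $\cdot$ and an even trilinear $[-,-,-]$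 such that $[[x,y,z],t,u]=[x,y,[z,t,u]]+\varepsilon(z,t+u)[x,[y,t,u],z]+\varepsilon(y+z,t+u)[[x,t,u],y,z]$ and $[x\cdot y,z,t]=x\cdot[y,z,t]+\varepsilon(y,z+t)[x,z,t]\cdot y$ for all homogeneous $x,y,z,t,u$. *)

(* Defs.v *)
From HB Require Import structures.
From mathcomp Require Import all_boot all_algebra.
Set Implicit Arguments. Unset Strict Implicit. Unset Printing Implicit Defensive.
Import GRing.Theory.
Local Open Scope ring_scope.

Section ColorDefs.
Variables (G : zmodType) (K : fieldType).

Definition skew_bichar (eps : G -> G -> K) : Prop :=
  (forall a b, eps a b * eps b a = 1) /\
  (forall a b c, eps a (b + c) = eps a b * eps a c) /\
  (forall a b c, eps (a + b) c = eps a c * eps b c).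

Definition klinear (U W : lmodType K) (g : U -> W) : Prop :=
  forall (k : K) x y, g (k *: x + y) = k *: g x + g y.

Definition kbilinear (U V W : lmodType K) (f : U -> V -> W) : Prop :=
  (forall (k : K) x x' y, f (k *: x + x') y = k *: f x y + f x' y) /\
  (forall (k : K) x y y', f x (k *: y + y') = k *: f x y + f x y').

Definition ktrilinear (V : lmodType K) (f : V -> V -> V -> V) : Prop :=
  (forall (k : K) x x' y z, f (k *: x + x') y z = k *: f x y z + f x' y z) /\
  (forall (k : K) x y y' z, f x (k *: y + y') z = k *: f x y z + f x y' z) /\
  (forall (k : K) x y z z', f x y (k *: z + z') = k *: f x y z + f x y z').

(* A G-grading of V: H g is the subspace V_g of homogeneous elements of
   degree g, and V = (+)_g V_g (every element is a finite sum of homogeneous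
   components, and the sum of the V_g is direct). *)
Definition is_grading (V : lmodType K) (H : G -> V -> Prop) : Prop :=
  [/\ forall g, H g 0 /\ (forall (k : K) x y, H g x -> H g y -> H g (k *: x + y)),
      forall v, exists (s : seq G) (f : G -> V),
          [/\ uniq s, forall g, H g (f g) & v = \sum_(g <- s) f g]
    & forall (s : seq G) (f : G -> V), uniq s -> (forall g, H g (f g)) ->
          \sum_(g <- s) f g = 0 -> forall g, g \in s -> f g = 0].

Definition even2 (V : lmodType K) (H : G -> V -> Prop) (m : V -> V -> V) :=
  forall a b x y, H a x -> H b y -> H (a + b) (m x y).

Definition even3 (V : lmodType K) (H : G -> V -> Prop) (m : V -> V -> V -> V) :=
  forall a b c x y z, H a x -> H b y -> H c z -> H (a + b + c) (m x y z).

Record LPcolor (V : lmodType K) (H : G -> V -> Prop) (eps : G -> G -> K)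
    (mul br : V -> V -> V) : Prop := {
  lp_grading : is_grading H;
  lp_mul_bilin : kbilinear mul;
  lp_br_bilin : kbilinear br;
  lp_mul_even : even2 H mul;
  lp_br_even : even2 H br;
  lp_mul_assoc : forall x y z, mul (mul x y) z = mul x (mul y z);
  lp_leibniz : forall a b c x y z, H a x -> H b y -> H c z ->
      br (br x y) z = br x (br y z) + eps b c *: br (br x z) y;
  lp_poisson : forall a b c x y z, H a x -> H b y -> H c z ->
      br (mul x y) z = mul x (br y z) + eps b c *: mul (br x z) y
}.

Record TLPcolor (A : lmodType K) (H : G -> A -> Prop) (eps : G -> G -> K)
    (mul : A -> A -> A) (br3 : A -> A -> A -> A) : Prop := {
  tlp_grading : is_grading H;
  tlp_mul_bilin : kbilinear mul;
  tlp_br_trilin : ktrilinear br3;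
  tlp_mul_even : even2 H mul;
  tlp_br_even : even3 H br3;
  tlp_mul_assoc : forall x y z, mul (mul x y) z = mul x (mul y z);
  tlp_leibniz : forall a b c d e x y z t u,
      H a x -> H b y -> H c z -> H d t -> H e u ->
      br3 (br3 x y z) t u = br3 x y (br3 z t u)
        + eps c (d + e) *: br3 x (br3 y t u) z
        + eps (b + c) (d + e) *: br3 (br3 x t u) y z;
  tlp_poisson : forall a b c d x y z t,
      H a x -> H b y -> H c z -> H d t ->
      br3 (mul x y) z t = mul x (br3 y z t) + eps b (c + d) *: mul (br3 x z t) y
}.

Definition is_tensor (A T : lmodType K) (t : A -> A -> T) : Prop :=
  [/\ kbilinear t,
      forall (W : lmodType K) (f : A -> A -> W), kbilinear f ->
        exists g : T -> W, klinear g /\ forall x y, g (t x y) = f x y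
    & forall (W : lmodType K) (g1 g2 : T -> W), klinear g1 -> klinear g2 ->
        (forall x y, g1 (t x y) = g2 (t x y)) -> forall v, g1 v = g2 v].

Definition tensor_grading (A T : lmodType K) (H : G -> A -> Prop)
    (t : A -> A -> T) : G -> T -> Prop :=
  fun c v => exists (n : nat) (xs ys : 'I_n -> A) (da db : 'I_n -> G),
    (forall i, [/\ H (da i) (xs i), H (db i) (ys i) & da i + db i = c]) /\
    v = \sum_(i < n) t (xs i) (ys i).

End ColorDefs.

(* Main.v *)
Require Import Defs.
From HB Require Import structures.
From mathcomp Require Import all_boot all_algebra.
From Stdlib Require Import ClassicalEpsilon.
Import GRing.Theory.
Local Open Scope ring_scope.
Set Implicit Arguments. Unset Strict Implicit. Unset Printing Implicit Defensive.

Lemma sum_mask (G : eqType) (V : nmodType) (s L : seq G) (f : G -> V) :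
  uniq s -> uniq L -> {subset s <= L} ->
  \sum_(g <- L) (if g \in s then f g else 0) = \sum_(g <- s) f g.
Proof.
move=> us uL sL; rewrite -big_mkcond /= -big_filter.
apply: perm_big; apply: uniq_perm; first by rewrite filter_uniq.
  by [].
by move=> x; rewrite mem_filter; case xs: (x \in s) => //=; rewrite sL.
Qed.

Section Lin.
Variables (K : fieldType).

Lemma lin0 (U W : lmodType K) (g : U -> W) : klinear g -> g 0 = 0.
Proof.
move=> h; have := h 1 0 0; rewrite !scale1r addr0 => e.
by apply: (@addrI _ (g 0)); rewrite addr0 -e.
Qed.

Lemma linD (U W : lmodType K) (g : U -> W) x y : klinear g -> g (x + y) = g x + g y.
Proof. by move=> h; have := h 1 x y; rewrite !scale1r. Qed.

Lemma linZ (U W : lmodType K) (g : U -> W) k x : klinear g -> g (k *: x) = k *: g x.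
Proof. by move=> h; rewrite -[k *: x]addr0 h (lin0 h) addr0. Qed.

Lemma lin_sum (U W : lmodType K) (g : U -> W) (I : Type) (r : seq I) (P : pred I) F :
  klinear g -> g (\sum_(i <- r | P i) F i) = \sum_(i <- r | P i) g (F i).
Proof.
move=> h; elim/big_rec2: _ => [|i y1 y2 _ <-]; first exact: lin0.
exact: linD.
Qed.

Lemma bil_l (U V W : lmodType K) (f : U -> V -> W) y :
  kbilinear f -> klinear (f^~ y).
Proof. by case=> h _ k x x'; exact: h. Qed.
Lemma bil_r (U V W : lmodType K) (f : U -> V -> W) x :
  kbilinear f -> klinear (f x).
Proof. by case=> _ h k y y'; exact: h. Qed.

End Lin.

Section GradA.
Variables (G : zmodType) (K : fieldType) (A : lmodType K) (HA : G -> A -> Prop).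
Hypothesis gr : is_grading HA.

Lemma homL g k x y : HA g x -> HA g y -> HA g (k *: x + y).
Proof. by case: gr => h _ _; case: (h g) => _; apply. Qed.
Lemma hom0 g : HA g 0.
Proof. by case: gr => h _ _; case: (h g). Qed.
Lemma homD g x y : HA g x -> HA g y -> HA g (x + y).
Proof. by move=> hx hy; have := homL 1 hx hy; rewrite scale1r. Qed.
Lemma homZ g k x : HA g x -> HA g (k *: x).
Proof. by move=> hx; have := homL k hx (hom0 g); rewrite addr0. Qed.
Lemma homB g x y : HA g x -> HA g y -> HA g (x - y).
Proof. by move=> hx hy; have := homL (-1) hy hx; rewrite scaleN1r addrC. Qed.

Lemma hom_uniq (s : seq G) (f f' : G -> A) : uniq s ->
  (forall g, HA g (f g)) -> (forall g, HA g (f' g)) ->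
  \sum_(g <- s) f g = \sum_(g <- s) f' g -> forall g, g \in s -> f g = f' g.
Proof.
move=> us hf hf' e g gs; apply/eqP; rewrite -subr_eq0; apply/eqP.
case: gr => _ _ h; apply: (h s (fun g => f g - f' g)) => //.
  by move=> x; apply: homB.
by rewrite sumrB e subrr.
Qed.

Lemma gr_ex (v : A) : exists sf : seq G * (G -> A),
  [/\ uniq sf.1, forall g, HA g (sf.2 g) & v = \sum_(g <- sf.1) sf.2 g].
Proof.
case: gr => _ h _; have [s [f [? ? ?]]] := h v; by exists (s, f).
Qed.

Definition dec (v : A) := proj1_sig (constructive_indefinite_description _ (gr_ex v)).
Lemma dec_spec v : [/\ uniq (dec v).1, forall g, HA g ((dec v).2 g)
   & v = \sum_(g <- (dec v).1) (dec v).2 g].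
Proof. exact: (proj2_sig (constructive_indefinite_description _ (gr_ex v))). Qed.

Definition supp v := (dec v).1.
Definition proj g v := if g \in supp v then (dec v).2 g else 0.

Lemma supp_uniq v : uniq (supp v). Proof. by case: (dec_spec v). Qed.
Lemma proj_hom g v : HA g (proj g v).
Proof. rewrite /proj; case: ifP => _; [by case: (dec_spec v)|exact: hom0]. Qed.
Lemma proj_out g v : g \notin supp v -> proj g v = 0.
Proof. by rewrite /proj => /negbTE ->. Qed.
Lemma sum_proj (L : seq G) v : uniq L -> {subset supp v <= L} ->
  \sum_(g <- L) proj g v = v.
Proof.
move=> uL sL; rewrite /proj sum_mask //; last exact: supp_uniq.
by case: (dec_spec v).
Qed.

Lemma projE (s : seq G) (f : G -> A) v g : uniq s -> (forall g, HA g (f g)) ->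
  v = \sum_(g <- s) f g -> proj g v = if g \in s then f g else 0.
Proof.
move=> us hf ev.
pose L := undup (s ++ supp v).
have uL : uniq L by apply: undup_uniq.
have sL : {subset s <= L} by move=> x xs; rewrite mem_undup mem_cat xs.
have sL' : {subset supp v <= L} by move=> x xs; rewrite mem_undup mem_cat xs orbT.
case gL: (g \in L); last first.
  rewrite proj_out; last by apply/negP => /sL'; rewrite gL.
  by case: ifP => // /sL; rewrite gL.
apply: (@hom_uniq L (fun g => proj g v) (fun g => if g \in s then f g else 0)) => //.
- by move=> x; apply: proj_hom.
- by move=> x; case: ifP => _; [apply: hf| apply: hom0].
by rewrite sum_proj // sum_mask.
Qed.

Lemma proj_homog a x g : HA a x -> proj g x = if g == a then x else 0.
Proof.
move=> hx; rewrite (@projE [:: a] (fun g => if g == a then x else 0) x g) //.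
- by rewrite mem_seq1; case: eqP.
- by move=> h; case: eqP => [->|]; [apply: hx|move=> _; apply: hom0].
by rewrite big_seq1 eqxx.
Qed.

Lemma proj_lin g k x y : proj g (k *: x + y) = k *: proj g x + proj g y.
Proof.
pose L := undup (supp x ++ supp y).
have uL : uniq L by apply: undup_uniq.
have sL : {subset supp x <= L} by move=> z zs; rewrite mem_undup mem_cat zs.
have sL' : {subset supp y <= L} by move=> z zs; rewrite mem_undup mem_cat zs orbT.
rewrite (@projE L (fun g => k *: proj g x + proj g y)) //.
- case: ifP => // gL; rewrite !proj_out ?scaler0 ?addr0 //.
    by apply/negP => /sL'; rewrite gL.
  by apply/negP => /sL; rewrite gL.
- by move=> h; apply: homL; apply: proj_hom.
by rewrite big_split /= -scaler_sumr !sum_proj.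
Qed.

Definition plin (W : lmodType K) (phi : G -> A -> W) :=
  forall g, klinear (phi g).

Definition gsum (W : lmodType K) (phi : G -> A -> W) (v : A) : W :=
  \sum_(g <- supp v) phi g (proj g v).

Lemma gsum_ext (W : lmodType K) (phi : G -> A -> W) v (L : seq G) :
  plin phi -> uniq L -> {subset supp v <= L} ->
  gsum phi v = \sum_(g <- L) phi g (proj g v).
Proof.
move=> hp uL sL; rewrite /gsum -(sum_mask (fun g => phi g (proj g v)) (supp_uniq v) uL sL).
apply: eq_bigr => g _; case: ifP => // /negbT gs.
by rewrite proj_out // (lin0 (hp g)).
Qed.

Lemma gsum_hom (W : lmodType K) (phi : G -> A -> W) a x :
  plin phi -> HA a x -> gsum phi x = phi a x.
Proof.
move=> hp hx.
pose L := undup (a :: supp x).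
have uL : uniq L by apply: undup_uniq.
have sL : {subset supp x <= L} by move=> z zs; rewrite mem_undup in_cons zs orbT.
rewrite (gsum_ext hp uL sL).
rewrite (eq_bigr (fun g => if g \in [:: a] then phi a x else 0)).
  by rewrite sum_mask // ?big_seq1 // => z; rewrite mem_seq1 => /eqP ->; rewrite mem_undup mem_head.
move=> g _; rewrite (proj_homog g hx) mem_seq1; case: eqP => [->|] //.
by rewrite (lin0 (hp g)).
Qed.

Lemma gsum_lin (W : lmodType K) (phi : G -> A -> W) :
  plin phi -> klinear (gsum phi).
Proof.
move=> hp k x y.
pose L := undup (supp x ++ supp y ++ supp (k *: x + y)).
have uL : uniq L by apply: undup_uniq.
rewrite (@gsum_ext _ _ x L) // ?(@gsum_ext _ _ y L) // ?(@gsum_ext _ _ (k *: x + y) L) //;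
  try by move=> z zs; rewrite mem_undup !mem_cat zs ?orbT.
rewrite scaler_sumr -big_split /=; apply: eq_bigr => g _.
by rewrite proj_lin hp.
Qed.

Lemma gsum_fun (W : lmodType K) (phi phi1 phi2 : G -> A -> W) k v :
  (forall g z, phi g z = k *: phi1 g z + phi2 g z) ->
  gsum phi v = k *: gsum phi1 v + gsum phi2 v.
Proof.
move=> e; rewrite /gsum scaler_sumr -big_split /=; apply: eq_bigr => g _; exact: e.
Qed.

End GradA.

Lemma choice1 (X Y : Type) (P : X -> Y -> Prop) :
  (forall x, exists y, P x y) -> exists f : X -> Y, forall x, P x (f x).
Proof.
move=> h; exists (fun x => proj1_sig (constructive_indefinite_description _ (h x))).
by move=> x; exact: (proj2_sig (constructive_indefinite_description _ (h x))).
Qed.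

Lemma choice2 (X Y Z : Type) (P : X -> Y -> Z -> Prop) :
  (forall x y, exists z, P x y z) -> exists f : X -> Y -> Z, forall x y, P x y (f x y).
Proof.
move=> h; have [f hf] := @choice1 (X * Y) Z (fun p z => P p.1 p.2 z) (fun p => h p.1 p.2).
by exists (fun x y => f (x, y)) => x y; exact: (hf (x, y)).
Qed.

Section Tens.
Variables (K : fieldType) (A T : lmodType K) (t : A -> A -> T).
Hypothesis ten : is_tensor t.

Lemma lin_comb (U W : lmodType K) (g1 g2 : U -> W) k :
  klinear g1 -> klinear g2 -> klinear (fun u => k *: g1 u + g2 u).
Proof.
move=> h1 h2 c x y; rewrite h1 h2 !scalerDr !scalerA mulrC.
by rewrite addrACA.
Qed.

Lemma tens_ext (W : lmodType K) (g1 g2 : T -> W) : klinear g1 -> klinear g2 ->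
  (forall x y, g1 (t x y) = g2 (t x y)) -> forall v, g1 v = g2 v.
Proof. by case: ten => _ _ h; apply: h. Qed.

Lemma tens_lift (W : lmodType K) (f : A -> A -> W) : kbilinear f ->
  exists g : T -> W, klinear g /\ forall x y, g (t x y) = f x y.
Proof. by case: ten => _ h _; apply: h. Qed.

Definition lin4 (W : lmodType K) (F : A -> A -> A -> A -> W) :=
  (forall x' y', kbilinear (fun x y => F x y x' y')) /\
  (forall x y, kbilinear (fun x' y' => F x y x' y')).

Lemma bil_ext (W : lmodType K) (F : A -> A -> A -> A -> W) : lin4 F ->
  exists m : T -> T -> W, kbilinear m /\
    forall x y x' y', m (t x y) (t x' y') = F x y x' y'.
Proof.
case=> F1 F2.
have [L hL] := @choice2 A A (T -> W) (fun x' y' L => klinear L /\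
   forall x y, L (t x y) = F x y x' y') (fun x' y' => tens_lift (F1 x' y')).
have hbil : forall u, kbilinear (fun x' y' => L x' y' u).
  move=> u; split => k x1 x2 y.
    apply: (@tens_ext _ (L (k *: x1 + x2) y) (fun u => k *: L x1 y u + L x2 y u)).
    - by case: (hL (k *: x1 + x2) y).
    - by apply: lin_comb; [case: (hL x1 y)|case: (hL x2 y)].
    move=> a b; rewrite !(proj2 (hL _ _)).
    by case: (F2 a b) => h _; apply: h.
  apply: (@tens_ext _ (L x1 (k *: x2 + y)) (fun u => k *: L x1 x2 u + L x1 y u)).
  - by case: (hL x1 (k *: x2 + y)).
  - by apply: lin_comb; [case: (hL x1 x2)|case: (hL x1 y)].
  move=> a b; rewrite !(proj2 (hL _ _)).
  by case: (F2 a b) => _ h; apply: h.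
have [M hM] := @choice1 T (T -> W) (fun u M => klinear M /\
   forall x' y', M (t x' y') = L x' y' u) (fun u => tens_lift (hbil u)).
exists (fun u v => M u v); split; last first.
  by move=> x y x' y'; rewrite (proj2 (hM _)) (proj2 (hL _ _)).
split => k u1 u2 v; last by case: (hM u1) => h _; apply: h.
apply: (@tens_ext _ (M (k *: u1 + u2)) (fun v => k *: M u1 v + M u2 v)).
- by case: (hM (k *: u1 + u2)).
- by apply: lin_comb; [case: (hM u1)|case: (hM u2)].
move=> a b; rewrite !(proj2 (hM _)).
by case: (hL a b) => h _; apply: h.
Qed.

End Tens.

Section LinComb.
Variables (K : fieldType).
Lemma lin_comp (U V W : lmodType K) (f : V -> W) (g : U -> V) :
  klinear f -> klinear g -> klinear (fun u => f (g u)).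
Proof. by move=> hf hg k x y; rewrite hg hf. Qed.
Lemma lin_scale (U W : lmodType K) (g : U -> W) c :
  klinear g -> klinear (fun u => c *: g u).
Proof. by move=> h k x y; rewrite h scalerDr !scalerA mulrC. Qed.
Lemma lin_add (U W : lmodType K) (f g : U -> W) :
  klinear f -> klinear g -> klinear (fun u => f u + g u).
Proof. by move=> hf hg k x y; rewrite hf hg scalerDr addrACA. Qed.
Lemma lin_id (U : lmodType K) : klinear (fun u : U => u).
Proof. by []. Qed.
Lemma bil_of (U V W : lmodType K) (f : U -> V -> W) :
  (forall y, klinear (fun x => f x y)) -> (forall x, klinear (f x)) -> kbilinear f.
Proof. by move=> h1 h2; split => k x x' y; [apply: h1|apply: h2]. Qed.
End LinComb.

Lemma gsum_param (G : zmodType) (K : fieldType) (A : lmodType K) (HA : G -> A -> Prop)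
  (gr : is_grading HA) (P W : lmodType K) (phi : P -> G -> A -> W) v :
  (forall g z, klinear (fun p => phi p g z)) -> klinear (fun p => gsum gr (phi p) v).
Proof. by move=> h k x y; apply: gsum_fun => g z; apply: h. Qed.

Section Main.
Variables (G : zmodType) (K : fieldType) (eps : G -> G -> K)
    (A : lmodType K) (HA : G -> A -> Prop)
    (mulA : A -> A -> A) (br3 : A -> A -> A -> A)
    (T : lmodType K) (t : A -> A -> T).
Hypotheses (es : skew_bichar eps) (tl : TLPcolor HA eps mulA br3) (ten : is_tensor t).

Let gr := tlp_grading tl.
Let gs (W : lmodType K) := @gsum G K A HA gr W.

Lemma tl1 y : klinear (fun x => t x y). Proof. by case: ten => h _ _; apply: bil_l. Qed.
Lemma tr1 x : klinear (t x). Proof. by case: ten => h _ _; apply: bil_r. Qed.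
Lemma ml1 y : klinear (fun x => mulA x y). Proof. by apply: bil_l; apply: tlp_mul_bilin tl. Qed.
Lemma mr1 x : klinear (mulA x). Proof. by apply: bil_r; apply: tlp_mul_bilin tl. Qed.
Lemma b31 y z : klinear (fun x => br3 x y z).
Proof. by case: (tlp_br_trilin tl) => h _ k x x'; apply: h. Qed.
Lemma b32 x z : klinear (fun y => br3 x y z).
Proof. by case: (tlp_br_trilin tl) => _ [h _] k y y'; apply: h. Qed.
Lemma b33 x y : klinear (br3 x y).
Proof. by case: (tlp_br_trilin tl) => _ [_ h] k z z'; apply: h. Qed.

Definition Mul4 x y x' y' :=
  gs (fun b yb => gs (fun a' xa' => eps b a' *: t (mulA x xa') (mulA yb y')) x') y.

Definition Br4 x y x' y' :=
  t x (br3 y x' y') +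
  gs (fun b yb => gs (fun a' xa' => gs (fun b' yb' =>
        eps b (a' + b') *: t (br3 x xa' yb') yb) y') x') y.

Lemma Mul4_lin : lin4 Mul4.
Proof.
split=> [x' y'|x y]; apply: bil_of.
- move=> y; apply: gsum_param => b yb; apply: gsum_param => a' xa'.
  apply: lin_scale; apply: (lin_comp (f := fun u => t u _)); [exact: tl1|exact: ml1].
- move=> x; apply: gsum_lin => b; apply: gsum_param => a' xa'.
  apply: lin_scale; apply: (lin_comp (f := fun u => t _ u)); [exact: tr1|exact: ml1].
- move=> y'; apply: gsum_param => b yb; apply: gsum_lin => a'.
  apply: lin_scale; apply: (lin_comp (f := fun u => t u _)); [exact: tl1|exact: mr1].
- move=> x'; apply: gsum_param => b yb; apply: gsum_param => a' xa'.
  apply: lin_scale; apply: (lin_comp (f := fun u => t _ u)); [exact: tr1|exact: mr1].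
Qed.

Lemma Br4_lin : lin4 Br4.
Proof.
split=> [x' y'|x y]; apply: bil_of.
- move=> y; apply: lin_add; first exact: tl1.
  apply: gsum_param => b yb; apply: gsum_param => a' xa'; apply: gsum_param => b' yb'.
  apply: lin_scale; apply: (lin_comp (f := fun u => t u _)); [exact: tl1|exact: b31].
- move=> x; apply: lin_add.
    apply: (lin_comp (f := fun u => t _ u)); [exact: tr1|exact: b31].
  apply: gsum_lin => b; apply: gsum_param => a' xa'; apply: gsum_param => b' yb'.
  by apply: lin_scale; apply: tr1.
- move=> y'; apply: lin_add.
    apply: (lin_comp (f := fun u => t _ u)); [exact: tr1|exact: b32].
  apply: gsum_param => b yb; apply: gsum_lin => a'; apply: gsum_param => b' yb'.
  apply: lin_scale; apply: (lin_comp (f := fun u => t u _)); [exact: tl1|exact: b32].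
- move=> x'; apply: lin_add.
    apply: (lin_comp (f := fun u => t _ u)); [exact: tr1|exact: b33].
  apply: gsum_param => b yb; apply: gsum_param => a' xa'; apply: gsum_lin => b'.
  apply: lin_scale; apply: (lin_comp (f := fun u => t u _)); [exact: tl1|exact: b33].
Qed.

Lemma Mul4_hom a b a' b' x y x' y' : HA a x -> HA b y -> HA a' x' -> HA b' y' ->
  Mul4 x y x' y' = eps b a' *: t (mulA x x') (mulA y y').
Proof.
move=> hx hy hx' hy'; rewrite /Mul4 /gs (gsum_hom _ _ hy).
  rewrite (gsum_hom _ _ hx') //.
  move=> g; apply: lin_scale; apply: (lin_comp (f := fun u => t u _)); [exact: tl1|exact: mr1].
move=> g; apply: gsum_param => a'' xa'.
apply: lin_scale; apply: (lin_comp (f := fun u => t _ u)); [exact: tr1|exact: ml1].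
Qed.

Lemma Br4_hom a b a' b' x y x' y' : HA a x -> HA b y -> HA a' x' -> HA b' y' ->
  Br4 x y x' y' = t x (br3 y x' y') + eps b (a' + b') *: t (br3 x x' y') y.
Proof.
move=> hx hy hx' hy'; rewrite /Br4 /gs (gsum_hom _ _ hy).
  rewrite (gsum_hom _ _ hx').
    rewrite (gsum_hom _ _ hy') //.
    move=> g; apply: lin_scale; apply: (lin_comp (f := fun u => t u _)); [exact: tl1|exact: b33].
  move=> g; apply: gsum_param => b'' yb'.
  apply: lin_scale; apply: (lin_comp (f := fun u => t u _)); [exact: tl1|exact: b32].
move=> g; apply: gsum_param => a'' xa'; apply: gsum_param => b'' yb'.
by apply: lin_scale; apply: tr1.
Qed.

End Main.

Section SubSp.
Variables (K : fieldType) (V : lmodType K) (Q : V -> Prop).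
Hypotheses (Q0 : Q 0) (QL : forall k u v, Q u -> Q v -> Q (k*:u+v)).
Definition Qb (v : V) : bool := if excluded_middle_informative (Q v) then true else false.
Lemma QbP v : reflect (Q v) (Qb v).
Proof. by rewrite /Qb; case: excluded_middle_informative => h; constructor. Qed.
Definition SS := {v : V | Qb v}.
Lemma QZD k u v : Qb u -> Qb v -> Qb (k *: u + v).
Proof. by move=> /QbP hu /QbP hv; apply/QbP; apply: QL. Qed.
Lemma Qb0 : Qb 0. Proof. exact/QbP. Qed.
Definition ss0 : SS := exist _ 0 Qb0.
Lemma QbD u v : Qb u -> Qb v -> Qb (u + v).
Proof. by move=> hu hv; have := QZD 1 hu hv; rewrite scale1r. Qed.
Lemma QbZ k u : Qb u -> Qb (k *: u).
Proof. by move=> hu; have := QZD k hu Qb0; rewrite addr0. Qed.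
Definition ssadd (u v : SS) : SS := exist _ (val u + val v) (QbD (valP u) (valP v)).
Definition ssscale (k : K) (u : SS) : SS := exist _ (k *: val u) (QbZ k (valP u)).
Definition ssopp (u : SS) : SS := ssscale (-1) u.
Lemma ssaddA : associative ssadd.
Proof. by move=> x y z; apply: val_inj; rewrite /= addrA. Qed.
Lemma ssaddC : commutative ssadd.
Proof. by move=> x y; apply: val_inj; rewrite /= addrC. Qed.
Lemma ssadd0 : left_id ss0 ssadd.
Proof. by move=> x; apply: val_inj; rewrite /= add0r. Qed.
Lemma ssaddN : left_inverse ss0 ssopp ssadd.
Proof. by move=> x; apply: val_inj; rewrite /= scaleN1r addNr. Qed.
HB.instance Definition _ := [Choice of SS by <:].
HB.instance Definition _ := GRing.isZmodule.Build SS ssaddA ssaddC ssadd0 ssaddN.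
Lemma ssscaleA a b v : ssscale a (ssscale b v) = ssscale (a * b) v.
Proof. by apply: val_inj; rewrite /= scalerA. Qed.
Lemma ssscale1 : left_id 1 ssscale.
Proof. by move=> x; apply: val_inj; rewrite /= scale1r. Qed.
Lemma ssscaleDr : right_distributive ssscale ssadd.
Proof. by move=> a x y; apply: val_inj; rewrite /= scalerDr. Qed.
Lemma ssscaleDl v : {morph ssscale^~ v : a b / a + b >-> ssadd a b}.
Proof. by move=> a b; apply: val_inj; rewrite /= scalerDl. Qed.
HB.instance Definition _ := GRing.Zmodule_isLmodule.Build K SS ssscaleA ssscale1 ssscaleDr ssscaleDl.

Lemma span_all (A : lmodType K) (t : A -> A -> V) : is_tensor t ->
  (forall x y, Q (t x y)) -> forall v, Q v.
Proof.
move=> ten ht.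
pose f x y : SS := exist _ (t x y) (introT (QbP _) (ht x y)).
have fb : kbilinear f.
  case: ten => [[h1 h2] _ _]; split=> k x x' y; apply: val_inj => /=; [exact: h1|exact: h2].
case: (tens_lift ten fb) => g [lg hg].
have e := @tens_ext K A V t ten V (fun v => val (g v)) (fun v => v).
have l1 : klinear (fun v => val (g v)) by move=> k x y; rewrite lg.
have l2 : forall x y, val (g (t x y)) = t x y by move=> x y; rewrite hg.
move=> v; rewrite -(e l1 (@lin_id K V) l2 v).
exact/QbP/(valP (g v)).
Qed.
End SubSp.

Definition fam (X : Type) n1 n2 (f1 : 'I_n1 -> X) (f2 : 'I_n2 -> X) (i : 'I_(n1 + n2)) : X :=
  match split i with inl j => f1 j | inr j => f2 j end.
Lemma fam_l X n1 n2 f1 f2 j : @fam X n1 n2 f1 f2 (lshift n2 j) = f1 j.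
Proof. by rewrite /fam (unsplitK (inl _ : 'I_n1 + 'I_n2)). Qed.
Lemma fam_r X n1 n2 f1 f2 j : @fam X n1 n2 f1 f2 (rshift n1 j) = f2 j.
Proof. by rewrite /fam (unsplitK (inr _ : 'I_n1 + 'I_n2)). Qed.

Section TGrad.
Variables (G : zmodType) (K : fieldType) (A : lmodType K) (HA : G -> A -> Prop)
  (T : lmodType K) (t : A -> A -> T).
Hypotheses (gr : is_grading HA) (ten : is_tensor t).

Lemma tl1' y : klinear (fun x => t x y). Proof. by case: ten => h _ _; apply: bil_l. Qed.
Lemma tr1' x : klinear (t x). Proof. by case: ten => h _ _; apply: bil_r. Qed.

Definition THP (R : G -> G -> Prop) (v : T) := exists (n : nat) (xs ys : 'I_n -> A) (da db : 'I_n -> G),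
    (forall i, [/\ HA (da i) (xs i), HA (db i) (ys i) & R (da i) (db i)]) /\
    v = \sum_(i < n) t (xs i) (ys i).

Lemma THP0 R : THP R 0.
Proof.
exists 0%N, (fun _ => 0), (fun _ => 0), (fun _ => 0), (fun _ => 0).
by split; [case|rewrite big_ord0].
Qed.

Lemma THP_pure (R : G -> G -> Prop) a b x y : HA a x -> HA b y -> R a b -> THP R (t x y).
Proof.
move=> hx hy hr; exists 1%N, (fun _ => x), (fun _ => y), (fun _ => a), (fun _ => b).
by split; [|rewrite big_ord1].
Qed.

Lemma THPL R k u v : THP R u -> THP R v -> THP R (k *: u + v).
Proof.
move=> [n1 [xs1 [ys1 [da1 [db1 [h1 e1]]]]]] [n2 [xs2 [ys2 [da2 [db2 [h2 e2]]]]]].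
exists (n1 + n2)%N, (fam (fun j => k *: xs1 j) xs2), (fam ys1 ys2), (fam da1 da2), (fam db1 db2).
split.
  move=> i; rewrite /fam; case: (split i) => j.
    by case: (h1 j) => ? ? ?; split => //; apply: homZ.
  exact: h2.
rewrite big_split_ord /= e1 e2 scaler_sumr; congr (_ + _); apply: eq_bigr => i _.
  by rewrite !fam_l (linZ _ _ (tl1' _)).
by rewrite !fam_r.
Qed.

Lemma THPD R u v : THP R u -> THP R v -> THP R (u + v).
Proof. by move=> hu hv; have := THPL 1 hu hv; rewrite scale1r. Qed.

Lemma THP_sum R (I : Type) (r : seq I) (F : I -> T) :
  (forall i, THP R (F i)) -> THP R (\sum_(i <- r) F i).
Proof.
move=> h; apply: (big_ind (THP R)); [exact: THP0|exact: THPD|by move=> i _].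
Qed.

Definition Qall := THP (fun _ _ => True).

Lemma Q_pure x y : Qall (t x y).
Proof.
rewrite -(@sum_proj _ _ _ _ gr (supp gr x) x) ?supp_uniq //.
rewrite -(@sum_proj _ _ _ _ gr (supp gr y) y) ?supp_uniq //.
rewrite (lin_sum _ _ _ (tl1' _)); apply: THP_sum => a.
rewrite (lin_sum _ _ _ (tr1' _)); apply: THP_sum => b.
by apply: (@THP_pure (fun _ _ => True) a b) => //; apply: proj_hom.
Qed.

Lemma Q_all v : Qall v.
Proof.
apply: (@span_all K T Qall (THP0 _) (@THPL _) A t ten Q_pure).
Qed.

Definition Dec (v : T) := exists (s : seq G) (f : G -> T),
  [/\ uniq s, forall g, tensor_grading HA t g (f g) & v = \sum_(g <- s) f g].

Lemma Dec0 : Dec 0.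
Proof. exists [::], (fun _ => 0); split => //; last by rewrite big_nil. move=> g; exact: (THP0 (fun a b => a + b = g)). Qed.

Lemma DecL k u v : Dec u -> Dec v -> Dec (k *: u + v).
Proof.
move=> [s1 [f1 [u1 h1 e1]]] [s2 [f2 [u2 h2 e2]]].
pose L := undup (s1 ++ s2).
have uL : uniq L by apply: undup_uniq.
exists L, (fun g => k *: (if g \in s1 then f1 g else 0) + (if g \in s2 then f2 g else 0)).
split => //.
  move=> g; apply: (THPL (R := fun a b => a + b = g)); case: ifP => _; (try exact: THP0);
  [exact: h1| exact: h2].
rewrite big_split /= -scaler_sumr !sum_mask // -?e1 -?e2 //.
  by move=> z zs; rewrite mem_undup mem_cat zs orbT.
by move=> z zs; rewrite mem_undup mem_cat zs.
Qed.

Lemma Dec_all v : Dec v.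
Proof.
have [n [xs [ys [da [db [h ->]]]]]] := Q_all v.
apply: (big_ind Dec); [exact: Dec0| |].
  by move=> x y hx hy; have := DecL 1 hx hy; rewrite scale1r.
move=> i _; case: (h i) => hx hy _.
exists [:: da i + db i], (fun g => if g == da i + db i then t (xs i) (ys i) else 0).
split => //; last by rewrite big_seq1 eqxx.
move=> g; case: eqP => [->|_]; last exact: (THP0 (fun a b => a + b = g)).
exact: (THP_pure (R := fun a b => a + b = _) hx hy).
Qed.

Definition Pi4 (c : G) (x y : A) : T := gsum gr (fun a xa => t xa (proj gr (c - a) y)) x.

Lemma Pi4_bil c : kbilinear (Pi4 c).
Proof.
apply: bil_of => [y|x].
  by apply: gsum_lin => a; apply: tl1'.
apply: gsum_param => a xa; apply: lin_comp; first exact: tr1'.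
by move=> k u w; apply: proj_lin.
Qed.

Lemma pi_ex : exists pi : G -> T -> T, forall c,
  klinear (pi c) /\ forall x y, pi c (t x y) = Pi4 c x y.
Proof.
apply: (@choice1 G (T -> T) (fun c g => klinear g /\ forall x y, g (t x y) = Pi4 c x y)).
move=> c; exact: (tens_lift ten (Pi4_bil c)).
Qed.

Lemma directT : forall (s : seq G) (f : G -> T), uniq s ->
  (forall g, tensor_grading HA t g (f g)) ->
  \sum_(g <- s) f g = 0 -> forall g, g \in s -> f g = 0.
Proof.
have [pi hpi] := pi_ex.
have pih : forall c a b x y, HA a x -> HA b y ->
    pi c (t x y) = if c == a + b then t x y else 0.
  move=> c a b x y hx hy; rewrite (proj2 (hpi c)) /Pi4 (gsum_hom _ _ hx); last first.
    by move=> g; apply: tl1'.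
  rewrite (proj_homog _ _ hy) subr_eq [b + a]addrC.
  by case: ifP => //; rewrite (lin0 (tr1' _)).
have piT : forall c d v, tensor_grading HA t d v -> pi c v = if c == d then v else 0.
  move=> c d v [n [xs [ys [da [db [h ->]]]]]].
  rewrite (lin_sum _ _ _ (proj1 (hpi c))).
  case: eqP => [->|ne].
    apply: eq_bigr => i _; case: (h i) => hx hy e.
    by rewrite (pih _ _ _ _ _ hx hy) e eqxx.
  apply: big1 => i _; case: (h i) => hx hy e.
  by rewrite (pih _ _ _ _ _ hx hy) e; case: eqP.
move=> s f us hf e g gs.
have := congr1 (pi g) e; rewrite (lin0 (proj1 (hpi g))) (lin_sum _ _ _ (proj1 (hpi g))).
rewrite (eq_bigr (fun c => if c \in [:: g] then f c else 0)); last first.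
  by move=> c _; rewrite (piT _ _ _ (hf c)) mem_seq1 eq_sym.
by rewrite sum_mask // ?big_seq1 // => z; rewrite mem_seq1 => /eqP ->.
Qed.

Lemma gradT : is_grading (tensor_grading HA t).
Proof.
split.
- move=> g; split; first exact: (THP0 (fun a b => a + b = g)).
  by move=> k x y; apply: (THPL (R := fun a b => a + b = g)).
- exact: Dec_all.
exact: directT.
Qed.

End TGrad.

From mathcomp Require Import ring.

Section Alg.
Variables (G : zmodType) (K : fieldType) (eps : G -> G -> K)
    (A : lmodType K) (HA : G -> A -> Prop)
    (mulA : A -> A -> A) (br3 : A -> A -> A -> A)
    (T : lmodType K) (t : A -> A -> T).
Hypotheses (es : skew_bichar eps) (tl : TLPcolor HA eps mulA br3) (ten : is_tensor t).
Variables (mul br : T -> T -> T).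
Hypotheses (mb : kbilinear mul) (bb : kbilinear br).
Hypothesis mh : forall a b a' b' x y x' y', HA a x -> HA b y -> HA a' x' -> HA b' y' ->
  mul (t x y) (t x' y') = eps b a' *: t (mulA x x') (mulA y y').
Hypothesis bh : forall a b a' b' x y x' y', HA a x -> HA b y -> HA a' x' -> HA b' y' ->
  br (t x y) (t x' y') = t x (br3 y x' y') + eps b (a' + b') *: t (br3 x x' y') y.

Lemma eDr a b c : eps a (b + c) = eps a b * eps a c. Proof. by case: es => _ [h _]. Qed.
Lemma eDl a b c : eps (a + b) c = eps a c * eps b c. Proof. by case: es => _ [_ h]. Qed.
Lemma eM a b : eps a b * eps b a = 1. Proof. by case: es. Qed.

Lemma tL y : klinear (fun x => t x y). Proof. by case: ten => h _ _; apply: bil_l. Qed.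
Lemma tR x : klinear (t x). Proof. by case: ten => h _ _; apply: bil_r. Qed.
Lemma tD1 x1 x2 y : t (x1 + x2) y = t x1 y + t x2 y. Proof. exact: (linD _ _ (tL y)). Qed.
Lemma tZ1 k x y : t (k *: x) y = k *: t x y. Proof. exact: (linZ _ _ (tL y)). Qed.
Lemma tD2 x y1 y2 : t x (y1 + y2) = t x y1 + t x y2. Proof. exact: (linD _ _ (tR x)). Qed.
Lemma tZ2 k x y : t x (k *: y) = k *: t x y. Proof. exact: (linZ _ _ (tR x)). Qed.
Lemma bD1 u1 u2 v : br (u1 + u2) v = br u1 v + br u2 v. Proof. exact: (linD _ _ (bil_l v bb)). Qed.
Lemma bZ1 k u v : br (k *: u) v = k *: br u v. Proof. exact: (linZ _ _ (bil_l v bb)). Qed.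
Lemma bD2 u v1 v2 : br u (v1 + v2) = br u v1 + br u v2. Proof. exact: (linD _ _ (bil_r u bb)). Qed.
Lemma bZ2 k u v : br u (k *: v) = k *: br u v. Proof. exact: (linZ _ _ (bil_r u bb)). Qed.
Lemma mD1 u1 u2 v : mul (u1 + u2) v = mul u1 v + mul u2 v. Proof. exact: (linD _ _ (bil_l v mb)). Qed.
Lemma mZ1 k u v : mul (k *: u) v = k *: mul u v. Proof. exact: (linZ _ _ (bil_l v mb)). Qed.
Lemma mD2 u v1 v2 : mul u (v1 + v2) = mul u v1 + mul u v2. Proof. exact: (linD _ _ (bil_r u mb)). Qed.
Lemma mZ2 k u v : mul u (k *: v) = k *: mul u v. Proof. exact: (linZ _ _ (bil_r u mb)). Qed.

Lemma eNZ a b : eps a b != 0.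
Proof. by apply/eqP => e; have := eM a b; rewrite e mul0r => /eqP; rewrite eq_sym oner_eq0. Qed.
Lemma eV a b : eps b a = (eps a b)^-1.
Proof. by apply: (mulfI (eNZ a b)); rewrite eM mulfV ?eNZ. Qed.

Lemma mL v : klinear (fun u => mul u v). Proof. exact: bil_l v mb. Qed.
Lemma mR u : klinear (mul u). Proof. exact: bil_r u mb. Qed.
Lemma bL v : klinear (fun u => br u v). Proof. exact: bil_l v bb. Qed.
Lemma bR u : klinear (br u). Proof. exact: bil_r u bb. Qed.

Let mev := tlp_mul_even tl.
Let bev := tlp_br_even tl.

Lemma leib_pure a1 b1 a2 b2 a3 b3 x y x' y' x'' y'' :
  HA a1 x -> HA b1 y -> HA a2 x' -> HA b2 y' -> HA a3 x'' -> HA b3 y'' ->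
  br (br (t x y) (t x' y')) (t x'' y'') =
  br (t x y) (br (t x' y') (t x'' y'')) +
  eps (a2 + b2) (a3 + b3) *: br (br (t x y) (t x'' y'')) (t x' y').
Proof.
move=> hx hy hx' hy' hx'' hy''.
rewrite (bh hx hy hx' hy') (bh hx' hy' hx'' hy'') (bh hx hy hx'' hy'').
rewrite bD1 bZ1 (bh hx (bev hy hx' hy') hx'' hy'') (bh (bev hx hx' hy') hy hx'' hy'').
rewrite bD2 bZ2 (bh hx hy hx' (bev hy' hx'' hy'')) (bh hx hy (bev hx' hx'' hy'') hy').
rewrite bD1 bZ1 (bh hx (bev hy hx'' hy'') hx' hy') (bh (bev hx hx'' hy'') hy hx' hy').
rewrite (tlp_leibniz tl hy hx' hy' hx'' hy'') (tlp_leibniz tl hx hx' hy' hx'' hy'').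
rewrite !(tD1, tD2, tZ1, tZ2, scalerDr, scalerA, addrA).
rewrite [RHS](ACl (1*3*5*7*6*2*4*8)).
congr (_ + _ + _ + _ + _ + _ + _ + _); congr (_ *: _); rewrite ?eDl ?eDr; try ring.
rewrite (eV a2 a3) (eV b2 a3) (eV a2 b3) (eV b2 b3); field.
by rewrite !eNZ.
Qed.

Lemma pois_pure a1 b1 a2 b2 a3 b3 x y x' y' x'' y'' :
  HA a1 x -> HA b1 y -> HA a2 x' -> HA b2 y' -> HA a3 x'' -> HA b3 y'' ->
  br (mul (t x y) (t x' y')) (t x'' y'') =
  mul (t x y) (br (t x' y') (t x'' y'')) +
  eps (a2 + b2) (a3 + b3) *: mul (br (t x y) (t x'' y'')) (t x' y').
Proof.
move=> hx hy hx' hy' hx'' hy''.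
rewrite (mh hx hy hx' hy') (bh hx' hy' hx'' hy'') (bh hx hy hx'' hy'').
rewrite bZ1 (bh (mev hx hx') (mev hy hy') hx'' hy'').
rewrite mD2 mZ2 (mh hx hy hx' (bev hy' hx'' hy'')) (mh hx hy (bev hx' hx'' hy'') hy').
rewrite mD1 mZ1 (mh hx (bev hy hx'' hy'') hx' hy') (mh (bev hx hx'' hy'') hy hx' hy').
rewrite (tlp_poisson tl hy hy' hx'' hy'') (tlp_poisson tl hx hx' hx'' hy'').
rewrite !(tD1, tD2, tZ1, tZ2, scalerDr, scalerA, addrA).
rewrite [RHS](ACl (1*3*2*4)).
congr (_ + _ + _ + _); congr (_ *: _); rewrite ?eDl ?eDr; try ring.
rewrite (eV a2 a3) (eV a2 b3); field.
by rewrite !eNZ.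
Qed.

Lemma assoc_pure a1 b1 a2 b2 a3 b3 x y x' y' x'' y'' :
  HA a1 x -> HA b1 y -> HA a2 x' -> HA b2 y' -> HA a3 x'' -> HA b3 y'' ->
  mul (mul (t x y) (t x' y')) (t x'' y'') = mul (t x y) (mul (t x' y') (t x'' y'')).
Proof.
move=> hx hy hx' hy' hx'' hy''.
rewrite (mh hx hy hx' hy') (mh hx' hy' hx'' hy'') mZ1 mZ2.
rewrite (mh (mev hx hx') (mev hy hy') hx'' hy'') (mh hx hy (mev hx' hx'') (mev hy' hy'')).
rewrite !(tlp_mul_assoc tl) !scalerA; congr (_ *: _); rewrite ?eDl ?eDr; ring.
Qed.

Lemma THPZ (R : G -> G -> Prop) k u : THP HA t R u -> THP HA t R (k *: u).
Proof.
move=> h; have := THPL (tlp_grading tl) ten k h (THP0 HA t R); by rewrite addr0.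
Qed.

Lemma tri_ext (F1 F2 : T -> T -> T -> T) (R1 R2 R3 : G -> G -> Prop) X Y Z :
  (forall v w, klinear (fun u => F1 u v w)) -> (forall u w, klinear (fun v => F1 u v w)) ->
  (forall u v, klinear (F1 u v)) ->
  (forall v w, klinear (fun u => F2 u v w)) -> (forall u w, klinear (fun v => F2 u v w)) ->
  (forall u v, klinear (F2 u v)) ->
  (forall a1 b1 a2 b2 a3 b3 x y x' y' x'' y'',
    HA a1 x -> HA b1 y -> HA a2 x' -> HA b2 y' -> HA a3 x'' -> HA b3 y'' ->
    R1 a1 b1 -> R2 a2 b2 -> R3 a3 b3 ->
    F1 (t x y) (t x' y') (t x'' y'') = F2 (t x y) (t x' y') (t x'' y'')) ->
  THP HA t R1 X -> THP HA t R2 Y -> THP HA t R3 Z -> F1 X Y Z = F2 X Y Z.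
Proof.
move=> l11 l12 l13 l21 l22 l23 hp.
move=> [n1 [xs1 [ys1 [da1 [db1 [h1 ->]]]]]] [n2 [xs2 [ys2 [da2 [db2 [h2 ->]]]]]].
move=> [n3 [xs3 [ys3 [da3 [db3 [h3 ->]]]]]].
rewrite (lin_sum _ _ _ (l11 _ _)) (lin_sum _ _ _ (l21 _ _)); apply: eq_bigr => i _.
rewrite (lin_sum _ _ _ (l12 _ _)) (lin_sum _ _ _ (l22 _ _)); apply: eq_bigr => j _.
rewrite (lin_sum _ _ _ (l13 _ _)) (lin_sum _ _ _ (l23 _ _)); apply: eq_bigr => k _.
case: (h1 i) => ? ? ?; case: (h2 j) => ? ? ?; case: (h3 k) => ? ? ?.
by apply: hp => //; eassumption.
Qed.

Lemma bi_TH (F : T -> T -> T) (R1 R2 R : G -> G -> Prop) X Y : kbilinear F ->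
  (forall a1 b1 a2 b2 x y x' y',
    HA a1 x -> HA b1 y -> HA a2 x' -> HA b2 y' -> R1 a1 b1 -> R2 a2 b2 ->
    THP HA t R (F (t x y) (t x' y'))) ->
  THP HA t R1 X -> THP HA t R2 Y -> THP HA t R (F X Y).
Proof.
move=> fb hp.
move=> [n1 [xs1 [ys1 [da1 [db1 [h1 ->]]]]]] [n2 [xs2 [ys2 [da2 [db2 [h2 ->]]]]]].
rewrite (lin_sum _ _ _ (bil_l _ fb)); apply: (THP_sum (tlp_grading tl) ten) => i.
rewrite (lin_sum _ _ _ (bil_r _ fb)); apply: (THP_sum (tlp_grading tl) ten) => j.
case: (h1 i) => ? ? ?; case: (h2 j) => ? ? ?.
by apply: hp => //; eassumption.
Qed.

Lemma lpT : LPcolor (tensor_grading HA t) eps mul br.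
Proof.
split => //.
- exact: (gradT (tlp_grading tl) ten).
- move=> a b X Y hX hY.
  apply: (@bi_TH mul (fun p q => p + q = a) (fun p q => p + q = b) (fun p q => p + q = a + b) X Y mb _ hX hY).
  move=> a1 b1 a2 b2 x y x' y' hx hy hx' hy' e1 e2.
  rewrite (mh hx hy hx' hy'); apply: THPZ.
  apply: (@THP_pure _ _ _ _ _ t (fun p q => p + q = a + b) _ _ _ _ (mev hx hx') (mev hy hy')).
  by rewrite -e1 -e2 addrACA.
- move=> a b X Y hX hY.
  apply: (@bi_TH br (fun p q => p + q = a) (fun p q => p + q = b) (fun p q => p + q = a + b) X Y bb _ hX hY).
  move=> a1 b1 a2 b2 x y x' y' hx hy hx' hy' e1 e2.
  rewrite (bh hx hy hx' hy'); apply: (THPD (tlp_grading tl) ten); last apply: THPZ.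
    apply: (@THP_pure _ _ _ _ _ t (fun p q => p + q = a + b) _ _ _ _ hx (bev hy hx' hy')).
    by rewrite -e1 -e2 !addrA.
  apply: (@THP_pure _ _ _ _ _ t (fun p q => p + q = a + b) _ _ _ _ (bev hx hx' hy') hy).
  by rewrite -e1 -e2 !addrA [LHS](ACl (1*4*2*3)).
- move=> X Y Z.
  have QA := Q_all (tlp_grading tl) ten.
  apply: (@tri_ext (fun u v w => mul (mul u v) w) (fun u v w => mul u (mul v w))
     (fun _ _ => True) (fun _ _ => True) (fun _ _ => True) X Y Z
     (fun v w => lin_comp (mL w) (mL v)) (fun u w => lin_comp (mL w) (mR u))
     (fun u v => mR (mul u v))
     (fun v w => mL (mul v w)) (fun u w => lin_comp (mR u) (mL w))
     (fun u v => lin_comp (mR u) (mR v)) _ (QA X) (QA Y) (QA Z)).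
  move=> *; apply: assoc_pure; eassumption.
- move=> a b c X Y Z hX hY hZ.
  apply: (@tri_ext (fun u v w => br (br u v) w)
     (fun u v w => br u (br v w) + eps b c *: br (br u w) v) (fun p q => p + q = a) (fun p q => p + q = b) (fun p q => p + q = c) X Y Z
     (fun v w => lin_comp (bL w) (bL v)) (fun u w => lin_comp (bL w) (bR u))
     (fun u v => bR (br u v))
     (fun v w => lin_add (bL (br v w)) (lin_scale _ (lin_comp (bL v) (bL w))))
     (fun u w => lin_add (lin_comp (bR u) (bL w)) (lin_scale _ (bR (br u w))))
     (fun u v => lin_add (lin_comp (bR u) (bR v)) (lin_scale _ (lin_comp (bL v) (bR u))))
     _ hX hY hZ).
  move=> a1 b1 a2 b2 a3 b3 x y x' y' x'' y'' hx hy hx' hy' hx'' hy'' _ <- <-.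
  exact: (leib_pure hx hy hx' hy' hx'' hy'').
- move=> a b c X Y Z hX hY hZ.
  apply: (@tri_ext (fun u v w => br (mul u v) w)
     (fun u v w => mul u (br v w) + eps b c *: mul (br u w) v) (fun p q => p + q = a) (fun p q => p + q = b) (fun p q => p + q = c) X Y Z
     (fun v w => lin_comp (bL w) (mL v)) (fun u w => lin_comp (bL w) (mR u))
     (fun u v => bR (mul u v))
     (fun v w => lin_add (mL (br v w)) (lin_scale _ (lin_comp (mL v) (bL w))))
     (fun u w => lin_add (lin_comp (mR u) (bL w)) (lin_scale _ (mR (br u w))))
     (fun u v => lin_add (lin_comp (mR u) (bR v)) (lin_scale _ (lin_comp (mL v) (bR u))))
     _ hX hY hZ).
  move=> a1 b1 a2 b2 a3 b3 x y x' y' x'' y'' hx hy hx' hy' hx'' hy'' _ <- <-.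
  exact: (pois_pure hx hy hx' hy' hx'' hy'').
Qed.
End Alg.

Unset Implicit Arguments.

Theorem mainTheorem17 (G : zmodType) (K : fieldType) (eps : G -> G -> K)
    (A : lmodType K) (HA : G -> A -> Prop)
    (mulA : A -> A -> A) (br3 : A -> A -> A -> A)
    (T : lmodType K) (t : A -> A -> T) :
  (2%:R : K) != 0 ->
  skew_bichar eps ->
  TLPcolor HA eps mulA br3 ->
  is_tensor t ->
  exists mul br : T -> T -> T,
    (forall a b a' b' x y x' y',
        HA a x -> HA b y -> HA a' x' -> HA b' y' ->
        mul (t x y) (t x' y') = eps b a' *: t (mulA x x') (mulA y y') /\
        br (t x y) (t x' y') =
          t x (br3 y x' y') + eps b (a' + b') *: t (br3 x x' y') y) /\
    LPcolor (tensor_grading HA t) eps mul br.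
Proof.
move=> _ es tl ten.
have [mul [mb mh]] := bil_ext ten (Mul4_lin tl ten).
have [br [bb bh]] := bil_ext ten (Br4_lin tl ten).
have mh' : forall a b a' b' x y x' y', HA a x -> HA b y -> HA a' x' -> HA b' y' ->
    mul (t x y) (t x' y') = eps b a' *: t (mulA x x') (mulA y y').
  by move=> a b a' b' x y x' y' hx hy hx' hy'; rewrite mh (Mul4_hom tl ten hx hy hx' hy').
have bh' : forall a b a' b' x y x' y', HA a x -> HA b y -> HA a' x' -> HA b' y' ->
    br (t x y) (t x' y') = t x (br3 y x' y') + eps b (a' + b') *: t (br3 x x' y') y.
  by move=> a b a' b' x y x' y' hx hy hx' hy'; rewrite bh (Br4_hom tl ten hx hy hx' hy').
exists mul, br; split.
  by move=> a b a' b' x y x' y' hx hy hx' hy'; rewrite (mh' _ _ _ _ _ _ _ _ hx hy hx' hy')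
    (bh' _ _ _ _ _ _ _ _ hx hy hx' hy').
exact: (lpT es tl ten mb bb mh' bh').
Qed.
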